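(* Let $G$ be a graph, let $q\ge k$ be integers, and let $X\subseteq Y\subseteq T\subseteq V(G)$. If $X$ is $(q,k)$-unbreakable in $G$ and no vertex of $Y$ is $(X,T,q+k)$-carvable, then $Y$ is $(q+k,k)$-unbreakable in $G$.
   Context: A vertex cut of $G$ is an ordered pair $(L,R)$ with $L\cup R=V(G)$, $L\setminus R,R\setminus L\ne\emptyset$ and no edge between $L\setminus R$ and $R\setminus L$; its size is $|L\cap R|$. A set $Z$ is $(q,k)$-unbreakable in $G$ if every vertex cut of size at most $k$ has $|L\cap Z|\le q$ or $|R\cap Z|\le q$. The torso $H_T$ of $T$ in $G$ is the graph with vertex set $T$ and an edge $\{u,v\}$ ($u,v\in T$) whenever $\{u,v\}\in E(G)$ or $u,v\in N_G(D)$ for some connected component $D$ of $G\setminus T$. For $X\subseteq T$ and an integer $k'$, an $(X,T,k')$-witness is a vertex cut $(L,R)$ of $G$ with $|L\cap R|\le k'$, $|L\cap T|>|L\cap R|$, and $X\subseteq R$; it is connected if $H_T[(L\setminus R)\cap T]$ is connected. A vertex $v$ is $(X,T,k')$-carvable if there is a connected $(X,T,k')$-witness $(L,R)$ with $v\in L\setminus R$. *)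

(* Defs.v *)
(* A (simple, finite) graph is a symmetric irreflexive
   relation e on a finite vertex type V. *)
From mathcomp Require Import all_boot all_order all_algebra.
From Stdlib Require Import Relation_Operators.
Set Implicit Arguments. Unset Strict Implicit. Unset Printing Implicit Defensive.
Import GRing.Theory Num.Theory.

Section Defs.
Variables (V : finType) (e : rel V).

Definition vertex_cut (L R : {set V}) : Prop :=
  [/\ L :|: R = [set: V], L :\: R != set0, R :\: L != set0 &
      forall x y, x \in L :\: R -> y \in R :\: L -> ~~ e x y].

Definition cut_size (L R : {set V}) : nat := #|L :&: R|.

Definition unbreakable (q k : int) (Z : {set V}) : Prop :=
  forall L R : {set V}, vertex_cut L R -> ((cut_size L R)%:Z <= k)%R ->
    (#|L :&: Z|%:Z <= q)%R \/ (#|R :&: Z|%:Z <= q)%R.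

Definition induced (S : {set V}) (r : rel V) : rel V :=
  [rel x y | [&& x \in S, y \in S & r x y]].

Definition component_outside (T D : {set V}) : Prop :=
  exists2 x, x \in ~: T & D = [set y | connect (induced (~: T) e) x y].

Definition nbhd (D : {set V}) : {set V} :=
  [set u | (u \notin D) && [exists d in D, e u d]].

Definition torso_adj (T : {set V}) (u v : V) : Prop :=
  [/\ u \in T, v \in T, u != v &
      e u v \/ exists D, component_outside T D /\ u \in nbhd D /\ v \in nbhd D].

Definition torso_connected (T S : {set V}) : Prop :=
  forall u v, u \in S -> v \in S ->
    clos_refl_trans_1n V (fun a b => [/\ a \in S, b \in S & torso_adj T a b]) u v.

Definition witness (X T : {set V}) (k' : int) (L R : {set V}) : Prop :=
  [/\ vertex_cut L R, ((cut_size L R)%:Z <= k')%R,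
      (cut_size L R < #|L :&: T|)%N & X \subset R].

Definition connected_witness (X T : {set V}) (k' : int) (L R : {set V}) : Prop :=
  witness X T k' L R /\ torso_connected T ((L :\: R) :&: T).

Definition carvable (X T : {set V}) (k' : int) (v : V) : Prop :=
  exists L R : {set V}, connected_witness X T k' L R /\ v \in L :\: R.

End Defs.

(* Main.v *)
Require Import Defs.
From mathcomp Require Import all_boot all_order all_algebra.
From Stdlib Require Import Relation_Operators ClassicalEpsilon Classical.
From mathcomp Require Import zify.
Import Order.TTheory GRing.Theory Num.Theory.
Set Implicit Arguments. Unset Strict Implicit.

Section H.
Variables (V : finType) (e : rel V).
Hypotheses (e_sym : symmetric e) (e_irr : irreflexive e).
Variable T : {set V}.

Definition comp (x : V) : {set V} := [set y | connect (induced (~: T) e) x y].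

Lemma induced_sym : symmetric (induced (~:T) e).
Proof. move=> x y; rewrite /induced /= (e_sym x y); by case: (x \in ~:T); case: (y \in ~:T). Qed.

Lemma comp_notT x y : y \in comp x -> x \notin T -> y \notin T.
Proof.
rewrite inE => cxy xT.
have cl : closed (induced (~:T) e) (~:T).
  by move=> a b /= /and3P [-> -> _].
by have := closed_connect cl cxy; rewrite !inE xT => <-.
Qed.

Lemma comp_self x : x \in comp x.
Proof. by rewrite inE connect0. Qed.

Lemma comp_eq x y : y \in comp x -> comp y = comp x.
Proof.
rewrite inE => cxy; apply/setP => z; rewrite !inE.
by rewrite (same_connect (sym_connect_sym induced_sym) cxy).
Qed.

Lemma comp_edge x y : x \notin T -> y \notin T -> e x y -> comp y = comp x.
Proof.
move=> xT yT exy; apply: comp_eq; rewrite /comp inE; apply: connect1.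
by rewrite /induced /= !inE xT yT exy.
Qed.

Lemma comp_component x : x \notin T -> component_outside e T (comp x).
Proof. by move=> xT; exists x; rewrite ?inE. Qed.

Lemma nbhd_comp x c d : x \notin T -> c \in T -> d \in comp x -> e c d ->
  c \in nbhd e (comp x).
Proof.
move=> xT cT dx ecd; rewrite inE; apply/andP; split.
  by apply/negP => /comp_notT /(_ xT); rewrite cT.
by apply/existsP; exists d; rewrite dx.
Qed.

Lemma torso_adj_sym a b : torso_adj e T a b -> torso_adj e T b a.
Proof.
case=> ha hb hab [h|[D [hD [h1 h2]]]]; (split => //; first by rewrite eq_sym).
  by left; rewrite e_sym.
by right; exists D.
Qed.

End H.

Definition Zs (V : finType) (e : rel V) (T L R C : {set V}) : {set V} :=
  C :|: [set w in (L:\:R):\:T | [exists c in C, [exists d in comp e T w, e c d]]].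
Definition Ss (V : finType) (e : rel V) (T L R C : {set V}) : {set V} :=
  [set s in L :&: R | [exists z in Zs e T L R C, e z s]].

Section Cons.
Variables (V : finType) (e : rel V).
Hypotheses (e_sym : symmetric e) (e_irr : irreflexive e).
Variables (T L R C : {set V}).
Hypotheses (cutE : forall x y, x \in L :\: R -> y \in R :\: L -> ~~ e x y)
  (CA : C \subset (L :\: R) :&: T)
  (Ccl : forall a b, a \in (L :\: R) :&: T -> b \in (L :\: R) :&: T ->
      torso_adj e T a b -> a \in C -> b \in C).

Local Notation Z := (Zs e T L R C).
Local Notation S := (Ss e T L R C).

Lemma CAm a : a \in C -> a \in (L :\: R) :&: T.
Proof. exact: (subsetP CA). Qed.

Lemma CT a : a \in C -> a \in T.
Proof. by move/CAm; rewrite inE => /andP []. Qed.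

Lemma Z_sub : Z \subset L :\: R.
Proof.
apply/subsetP => z; rewrite /Zs !inE => /orP [/(subsetP CA)|].
  by rewrite !inE; case/andP.
by case/andP => /and3P [_ -> ->].
Qed.

Lemma S_sub : S \subset L :&: R.
Proof. by apply/subsetP => z; rewrite /Ss inE => /andP []. Qed.

Lemma Z_Y (Y : {set V}) : Y \subset T -> Z :&: Y = C :&: Y.
Proof.
move=> YT; apply/setP => z; rewrite /Zs !inE; case zY: (z \in Y); rewrite ?andbF ?andbT //.
have zT := subsetP YT _ zY.
by rewrite zT /= orbF.
Qed.

Lemma memZ2 y c d : y \notin T -> y \in L :\: R -> c \in C -> d \in comp e T y -> e c d ->
  y \in Z.
Proof.
move=> yT yLR cC dy ecd; rewrite /Zs inE; apply/orP; right.
rewrite inE; apply/andP; split; first by rewrite inE yT.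
apply/existsP; exists c; rewrite cC /=; apply/existsP; exists d; by rewrite dy.
Qed.

Lemma Z_edge x y : x \in Z -> y \in L :\: R -> y \notin Z -> ~~ e x y.
Proof.
move=> xZ yLR yZ; apply/negP => exy.
have yC : y \notin C by apply: contra yZ; rewrite /Zs inE => ->.
case: (boolP (y \in T)) => yT.
  have yA : y \in (L :\: R) :&: T by rewrite inE yLR yT.
  move: xZ; rewrite /Zs inE => /orP [xC|].
    have : y \in C.
      apply: (Ccl (CAm xC) yA _ xC); split => //; first exact: CT.
        by apply/eqP => exy'; subst; rewrite e_irr in exy.
      by left.
    by rewrite (negbTE yC).
  rewrite !inE => /andP [/and3P [xT _ _] /existsP [c /andP [cC /existsP [d /andP [dx ecd]]]]].
  have cN : c \in nbhd e (comp e T x) := nbhd_comp xT (CT cC) dx ecd.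
  have yN : y \in nbhd e (comp e T x).
    rewrite inE; apply/andP; split.
      by apply/negP => /comp_notT /(_ xT); rewrite yT.
    by apply/existsP; exists x; rewrite comp_self e_sym.
  case: (eqVneq c y) => [ecy|cy]; first by rewrite -ecy cC in yC.
  have : y \in C.
    apply: (Ccl (CAm cC) yA _ cC); split => //; first exact: CT.
    right; exists (comp e T x); split => //; exact: comp_component.
  by rewrite (negbTE yC).
apply: (negP yZ).
have xZ' := xZ; rewrite /Zs !inE in xZ'.
case/orP: xZ' => [xC|/andP [/and3P [xT _ _] /existsP [c /andP [cC /existsP [d /andP [dx ecd]]]]]].
  by apply: (memZ2 yT yLR xC (comp_self _ _ y) exy).
apply: (memZ2 yT yLR cC _ ecd).
by rewrite (comp_edge e_sym xT yT exy).
Qed.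

Lemma ZS_disj z : z \in S -> z \notin Z.
Proof.
move=> /(subsetP S_sub); rewrite inE => /andP [_ zR].
by apply/negP => /(subsetP Z_sub); rewrite inE zR.
Qed.

Lemma Z_LR : (Z :|: S) :\: ~: Z = Z.
Proof. by apply/setP => z; rewrite in_setD in_setU in_setC negbK; case: (z \in Z). Qed.

Lemma Z_I : (Z :|: S) :&: ~: Z = S.
Proof.
apply/setP => z; rewrite in_setI in_setU in_setC; case zS: (z \in S); last by rewrite orbF andbN.
by rewrite (ZS_disj zS) orbT.
Qed.

Lemma Z_size : cut_size (Z :|: S) (~: Z) = #|S|.
Proof. by rewrite /cut_size Z_I. Qed.

Lemma Z_cut r : r \in R :\: L -> Z != set0 -> L :|: R = setT ->
  vertex_cut e (Z :|: S) (~: Z).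
Proof.
move=> rRL Z0 LRT; split.
- by apply/setP => z; rewrite in_setU in_setU in_setC in_setT; case: (z \in Z); rewrite ?orbT.
- by rewrite Z_LR.
- have rZ : r \notin Z.
    apply/negP => /(subsetP Z_sub); rewrite inE; move: rRL; rewrite inE.
    by case: (r \in L); case: (r \in R).
  have rS : r \notin S.
    apply/negP => /(subsetP S_sub); rewrite inE; move: rRL; rewrite inE.
    by case: (r \in L); case: (r \in R).
  apply/set0Pn; exists r.
  by rewrite in_setD in_setU in_setC (negbTE rZ) (negbTE rS).
- move=> x y; rewrite Z_LR => xZ; rewrite in_setD in_setU in_setC negb_or => /andP [/andP [yZ yS] _].
  have : y \in L :|: R by rewrite LRT inE.
  rewrite inE; case yR: (y \in R); case yL: (y \in L) => //= _.
  + apply/negP => exy; apply: (negP yS); rewrite /Ss inE !inE yL yR /=.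
    by apply/existsP; exists x; rewrite xZ exy.
  + have xLR : x \in L :\: R by apply: (subsetP Z_sub).
    by apply: cutE => //; rewrite inE yL yR.
  + apply: Z_edge => //; by rewrite inE yL yR.
Qed.

Lemma S_nbhd z s : z \in Z -> e z s -> s \notin T ->
  exists2 c, c \in C & c \in nbhd e (comp e T s).
Proof.
move=> zZ ezs sT; move: zZ; rewrite /Zs inE => /orP [zC|].
  by exists z => //; apply: nbhd_comp (CT zC) (comp_self _ _ _) ezs.
rewrite !inE => /andP [/and3P [zT _ _] /existsP [c /andP [cC /existsP [d /andP [dz ecd]]]]].
exists c => //; apply: nbhd_comp (CT cC) _ ecd => //.
by rewrite (comp_edge e_sym zT sT ezs).
Qed.

End Cons.

Definition pb (P : Prop) : bool := if excluded_middle_informative P then true else false.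
Lemma pbP (P : Prop) : reflect P (pb P).
Proof. rewrite /pb; case: excluded_middle_informative => h; by constructor. Qed.

Section Main.
Variables (V : finType) (e : rel V).
Hypotheses (e_sym : symmetric e) (e_irr : irreflexive e).
Variables (q k : int) (X Y T : {set V}).
Hypotheses (YT : Y \subset T) (Hnc : forall v, v \in Y -> ~ carvable e X T (q + k)%R v).

Lemma S_disj (L R C C' : {set V}) (s : V) : C \subset (L :\: R) :&: T -> C' \subset (L :\: R) :&: T ->
  (forall a b, a \in (L :\: R) :&: T -> b \in (L :\: R) :&: T ->
      torso_adj e T a b -> a \in C -> b \in C) ->
  (forall c, c \in C' -> c \notin C) ->
  s \in Ss e T L R C -> s \in Ss e T L R C' -> s \notin T -> False.
Proof.
move=> CA CA' Ccl disj.
rewrite /Ss inE => /andP [_ /existsP [z1 /andP [z1Z ez1]]].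
rewrite inE => /andP [_ /existsP [z2 /andP [z2Z ez2]]] sT.
have [c1 c1C c1N] := S_nbhd e_sym CA z1Z ez1 sT.
have [c2 c2C c2N] := S_nbhd e_sym CA' z2Z ez2 sT.
have c2nC := disj _ c2C.
have c1A := CAm CA c1C.
have c2A := CAm CA' c2C.
have : c2 \in C.
  apply: (Ccl _ _ c1A c2A _ c1C); split.
  - by move: c1A; rewrite inE => /andP [].
  - by move: c2A; rewrite inE => /andP [].
  - by apply/eqP => h; subst; rewrite c1C in c2nC.
  - right; exists (comp e T s); split => //; exact: comp_component.
by rewrite (negbTE c2nC).
Qed.

Local Notation AA L R := ((L :\: R) :&: T).

Lemma ind n : forall L R : {set V}, #|L :\: R| <= n -> vertex_cut e L R ->
  ((cut_size L R)%:Z <= q + k)%R -> X \subset R ->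
  #|(L :&: R) :\: T| < #|(L :\: R) :&: Y| -> False.
Proof.
elim: n => [|n IH] L R hn hcut hsz hX hcnt.
  have : #|(L :\: R) :&: Y| <= #|L :\: R| by apply: subset_leq_card; apply: subsetIl.
  lia.
case: (classic (torso_connected e T (AA L R))) => hconn.
  have : (L :\: R) :&: Y != set0 by rewrite -card_gt0; lia.
  case/set0Pn => y; rewrite in_setI => /andP [yLR yY].
  apply: (Hnc yY); exists L, R; split; last by [].
  split; last by [].
  split => //.
  rewrite /cut_size.
  have h1 := cardsID T (L :&: R).
  have h2 := cardsID R (L :&: T).
  have h3 : (L :&: T) :&: R = (L :&: R) :&: T by rewrite setIAC.
  have h4 : #|(L :\: R) :&: Y| <= #|(L :&: T) :\: R|.
    apply: subset_leq_card; apply/subsetP => z; rewrite !inE => /andP [/andP [zR zL] zY].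
    by rewrite zR zL (subsetP YT _ zY).
  rewrite h3 in h2; lia.
have [u0 [v0 [u0A [v0A nuv]]]] : exists u v, u \in AA L R /\ v \in AA L R /\
   ~ clos_refl_trans_1n V (fun a b => [/\ a \in AA L R, b \in AA L R & torso_adj e T a b]) u v.
  apply: NNPP => H; apply: hconn => u v hu hv; apply: NNPP => h; apply: H; by exists u, v.
pose C := [set w in AA L R | pb (clos_refl_trans_1n V
    (fun a b => [/\ a \in AA L R, b \in AA L R & torso_adj e T a b]) w v0)].
have CA : C \subset AA L R by apply/subsetP => w; rewrite /C in_set => /andP [].
have Ccl : forall a b, a \in AA L R -> b \in AA L R -> torso_adj e T a b -> a \in C -> b \in C.
  move=> a b aA bA ab; rewrite /C [a \in _]in_set [b \in _]in_set aA bA /= => /pbP ha; apply/pbP.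
  apply: rt1n_trans ha; split => //; exact: torso_adj_sym.
have C'cl : forall a b, a \in AA L R -> b \in AA L R -> torso_adj e T a b ->
    a \in AA L R :\: C -> b \in AA L R :\: C.
  move=> a b aA bA ab; rewrite in_setD => /andP [aC _]; rewrite in_setD bA andbT.
  apply: contra aC => bC; exact: (Ccl b a bA aA (torso_adj_sym e_sym ab) bC).
have C'A : AA L R :\: C \subset AA L R by apply: subsetDl.
have disj : forall c, c \in AA L R :\: C -> c \notin C by move=> c; rewrite in_setD => /andP [].
have v0C : v0 \in C by rewrite /C in_set v0A /=; apply/pbP; apply: rt1n_refl.
have u0C : u0 \notin C by rewrite /C in_set u0A /=; apply/negP => /pbP h; exact: nuv h.
have step : forall C0 : {set V}, C0 \subset AA L R ->
    (forall a b, a \in AA L R -> b \in AA L R -> torso_adj e T a b -> a \in C0 -> b \in C0) ->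
    (exists2 w, w \in AA L R & w \notin C0) ->
    #|Ss e T L R C0 :\: T| < #|Zs e T L R C0 :&: Y| -> False.
  move=> C0 C0A C0cl [w wA wC0] hc.
  have [LRT LR0 RL0 cutE] := hcut.
  have Zsub := Z_sub e C0A.
  have Zne : Zs e T L R C0 != set0.
    rewrite -card_gt0.
    have h : #|Zs e T L R C0 :&: Y| <= #|Zs e T L R C0| by apply: subset_leq_card; apply: subsetIl.
    exact: leq_trans (leq_ltn_trans (leq0n _) hc) h.
  case/set0Pn: RL0 => r rRL.
  apply: (IH (Zs e T L R C0 :|: Ss e T L R C0) (~: Zs e T L R C0)).
  - rewrite Z_LR.
    have wT : w \in T by move: wA; rewrite in_setI => /andP [].
    have wLR : w \in L :\: R by move: wA; rewrite in_setI => /andP [].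
    have : Zs e T L R C0 \proper L :\: R.
      apply/properP; split => //; exists w => //.
      apply/negP => wZ.
      have : w \in Zs e T L R C0 :&: T by rewrite in_setI wZ wT.
      rewrite (Z_Y e L R C0 (subxx T)) in_setI => /andP [h _].
      by rewrite h in wC0.
    move/proper_card => h; rewrite -ltnS; exact: leq_trans h hn.
  - exact: (Z_cut e_sym e_irr cutE C0A C0cl rRL Zne LRT).
  - rewrite (Z_size e C0A); apply: le_trans hsz; rewrite lez_nat /cut_size.
    apply: subset_leq_card; exact: S_sub.
  - apply/subsetP => x xX; rewrite in_setC; apply/negP => /(subsetP Zsub).
    by rewrite in_setD (subsetP hX _ xX).
  - by rewrite Z_LR (Z_I e C0A).
have e1 : #|(L :\: R) :&: Y| <= #|Zs e T L R C :&: Y| + #|Zs e T L R (AA L R :\: C) :&: Y|.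
  rewrite (Z_Y e L R C YT) (Z_Y e L R (AA L R :\: C) YT).
  apply: (leq_trans _ (leq_card_setU _ _).1); apply: subset_leq_card; apply/subsetP => z.
  rewrite in_setI => /andP [zLR zY]; rewrite in_setU !in_setI in_setD zY in_setI (subsetP YT _ zY) zLR /= !andbT.
  by case: (z \in C).
have e2 : #|Ss e T L R C :\: T| + #|Ss e T L R (AA L R :\: C) :\: T| <= #|(L :&: R) :\: T|.
  have dj : (Ss e T L R C :\: T) :&: (Ss e T L R (AA L R :\: C) :\: T) = set0.
    apply/setP => s; rewrite in_set0 in_setI !in_setD.
    apply/negP => /andP [/andP [sT s1] /andP [_ s2]].
    exact: (S_disj CA C'A Ccl disj s1 s2 sT).
  have := cardsU (Ss e T L R C :\: T) (Ss e T L R (AA L R :\: C) :\: T).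
  rewrite dj cards0 subn0 => <-.
  apply: subset_leq_card; apply/subsetP => s.
  rewrite in_setU !in_setD => /orP [] /andP [sT sS]; rewrite sT /=;
    exact: (subsetP (S_sub _ _ _ _ _) _ sS).
case: (ltnP #|Ss e T L R C :\: T| #|Zs e T L R C :&: Y|) => h.
  by apply: (step C CA Ccl _ h); exists u0.
apply: (step (AA L R :\: C) C'A C'cl).
  by exists v0 => //; rewrite in_setD v0C.
clear -h e1 e2 hcnt; lia.
Qed.

Hypothesis XT : X \subset T.

Lemma red (L R : {set V}) : vertex_cut e L R -> ((cut_size L R)%:Z <= k)%R ->
  (#|L :&: X|%:Z <= q)%R -> ~~ (#|L :&: Y|%:Z <= q + k)%R -> False.
Proof.
move=> hcut hsz hLX hLY.
have [LRT LR0 RL0 cutE] := hcut.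
have hcnt : #|(L :&: (R :|: (L :&: X))) :\: T| < #|(L :\: (R :|: (L :&: X))) :&: Y|.
  have a1 : #|L :&: Y| <= #|(L :\: (R :|: (L :&: X))) :&: Y| + #|(L :&: R) :&: Y| + #|L :&: X|.
    apply: leq_trans (_ : #|((L :\: (R :|: (L :&: X))) :&: Y :|: (L :&: R) :&: Y) :|: L :&: X| <= _).
      apply: subset_leq_card; apply/subsetP => z; rewrite !inE.
      by case: (z \in L); case: (z \in R); case: (z \in X); case: (z \in Y).
    rewrite (leq_trans (leq_card_setU _ _).1) // leq_add2r; exact: (leq_card_setU _ _).1.
  have a2 := cardsID Y (L :&: R).
  have a3 : #|(L :&: (R :|: (L :&: X))) :\: T| <= #|(L :&: R) :\: Y|.
    apply: subset_leq_card; apply/subsetP => z; rewrite !inE.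
    case zT: (z \in T) => //=.
    have zX : (z \in X) = false by apply/negP => /(subsetP XT); rewrite zT.
    have zY : (z \in Y) = false by apply/negP => /(subsetP YT); rewrite zT.
    by rewrite zX zY; case: (z \in L); case: (z \in R).
  rewrite /cut_size in hsz.
  clear -a1 a2 a3 hsz hLX hLY; lia.
apply: (@ind #|L :\: (R :|: (L :&: X))| L (R :|: (L :&: X)) (leqnn _) _ _ _ hcnt).
- split.
  + apply/setP => z; move/setP: LRT => /(_ z); rewrite !inE.
    by case: (z \in L); case: (z \in R).
  + rewrite -card_gt0.
    have h : #|(L :\: (R :|: (L :&: X))) :&: Y| <= #|L :\: (R :|: (L :&: X))|.
      by apply: subset_leq_card; apply: subsetIl.
    exact: leq_trans (leq_ltn_trans (leq0n _) hcnt) h.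
  + case/set0Pn: RL0 => r; rewrite !inE => /andP [rL rR]; apply/set0Pn; exists r.
    by rewrite !inE (negbTE rL) rR.
  + move=> x y; rewrite !inE => /andP [xR' xL] /andP [yL yR']; apply: cutE; rewrite inE.
      by move: xR' xL; case: (x \in R); case: (x \in L).
    by move: yL yR'; case: (y \in R); case: (y \in L).
- have : #|L :&: (R :|: (L :&: X))| <= #|L :&: R| + #|L :&: X|.
    rewrite setIUr setIA setIid; exact: (leq_card_setU _ _).1.
  rewrite /cut_size in hsz *.
  clear -hsz hLX; move=> h; lia.
- apply/subsetP => x xX; move/setP: LRT => /(_ x); rewrite !inE xX andbT.
  by case: (x \in L); case: (x \in R).
Qed.

End Main.

Lemma cut_swap (V : finType) (e : rel V) (e_sym : symmetric e) (L R : {set V}) :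
  vertex_cut e L R -> vertex_cut e R L.
Proof.
case=> LRT a b c; split => //; first by rewrite setUC.
by move=> x y hx hy; rewrite e_sym; exact: c y x hy hx.
Qed.

Theorem lemma5p5 (V : finType) (e : rel V) (e_sym : symmetric e)
    (e_irr : irreflexive e) (q k : int) (X Y T : {set V}) :
  (k <= q)%R -> X \subset Y -> Y \subset T ->
  unbreakable e q k X ->
  (forall v, v \in Y -> ~ carvable e X T (q + k)%R v) ->
  unbreakable e (q + k)%R k Y.
Proof.
move=> hkq hXY hYT hX hnc L R hcut hsz.
have XT : X \subset T := subset_trans hXY hYT.
case: (boolP (#|L :&: Y|%:Z <= q + k)%R) => h1; first by left.
case: (boolP (#|R :&: Y|%:Z <= q + k)%R) => h2; first by right.
exfalso.
case: (hX L R hcut hsz) => hL.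
  exact: (red e_sym e_irr hYT hnc XT hcut hsz hL h1).
have hcut' : vertex_cut e R L := cut_swap e_sym hcut.
have hsz' : cut_size R L = cut_size L R by rewrite /cut_size setIC.
by apply: (red e_sym e_irr hYT hnc XT hcut' _ hL h2); rewrite hsz'.
Qed.
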